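(* Let $15\le y<x$ and let $\Psi(x,y)$ be the number of positive integers $n\le x$ having no prime divisor $>y$. Then \[ \Psi(x,y)\le C\,x\,e^{-u/2},\qquad u=\frac{\log x}{\log y},\quad C=67.21. \] *)

(* Defs.v *)
From Stdlib Require Import Reals.
From mathcomp Require Import all_boot.
Open Scope R_scope.

Definition Rleb (a b : R) : bool := if Rle_dec a b then true else false.

Definition smooth (y : R) (n : nat) : bool :=
  all (fun p => Rleb (INR p) y) (primes n).

(* Psi(x,y) = #{ n positive integer : n <= x, n is y-smooth }.
   Every positive integer n <= x lies in 1 .. up x (since x < up x). *)
Definition Psi (x y : R) : nat :=
  count (fun n => Rleb (INR n) x && smooth y n) (iota 1 (Z.to_nat (up x))).

(* Main.v *)
Require Import Defs.
From HB Require Import structures.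
From Stdlib Require Import Reals Lra Lia Psatz ZArith.
From mathcomp Require Import all_boot zify.
Open Scope R_scope.

Lemma RplusA : associative Rplus. Proof. move=> a b c; ring. Qed.
HB.instance Definition _ := Monoid.isComLaw.Build R 0 Rplus RplusA Rplus_comm Rplus_0_l.

Notation "\rsum_ ( i <- r | P ) F" := (\big[Rplus/0]_(i <- r | P) F)
  (at level 41, F at level 41, i, r at level 50) : R_scope.
Notation "\rsum_ ( i <- r ) F" := (\big[Rplus/0]_(i <- r) F)
  (at level 41, F at level 41, i, r at level 50) : R_scope.

Lemma rsum_le (I : Type) (r : seq I) (P : pred I) (F G : I -> R) :
  (forall i, P i -> F i <= G i) -> \rsum_(i <- r | P i) F i <= \rsum_(i <- r | P i) G i.
Proof. move=> H; apply: (big_ind2 (fun a b => a <= b)) => //; [lra| move=> *; lra]. Qed.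

Lemma rsum_ge0 (I : Type) (r : seq I) (P : pred I) (F : I -> R) :
  (forall i, P i -> 0 <= F i) -> 0 <= \rsum_(i <- r | P i) F i.
Proof. move=> H; apply: (big_ind (fun a => 0 <= a)) => //; [lra| move=> *; lra]. Qed.

Lemma rsum_mull (I : Type) (r : seq I) (P : pred I) (F : I -> R) c :
  \rsum_(i <- r | P i) (c * F i) = c * \rsum_(i <- r | P i) F i.
Proof.
elim: r => [|a r IH]; rewrite ?big_nil ?big_cons; first ring.
case: (P a); rewrite IH; ring.
Qed.

Lemma rsum_count (I : Type) (r : seq I) (P Q : pred I) c :
  \rsum_(i <- r | P i) (if Q i then c else 0) = INR (count (fun i => P i && Q i) r) * c.
Proof.
elim: r => [|a r IH]; rewrite ?big_nil ?big_cons; first (rewrite /=; ring).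
rewrite IH [count _ (_ :: _)]/=; case: (P a); case: (Q a); rewrite ?add1n ?add0n ?S_INR; ring.
Qed.

Lemma rsum_const (I : Type) (r : seq I) (P : pred I) c :
  \rsum_(i <- r | P i) c = INR (count P r) * c.
Proof.
elim: r => [|a r IH]; rewrite ?big_nil ?big_cons; first (rewrite /=; ring).
rewrite IH [count _ (_ :: _)]/=; case: (P a); rewrite ?add1n ?add0n ?S_INR; ring.
Qed.


Lemma ln_big (I : Type) (r : seq I) (P : pred I) (F : I -> nat) :
  (forall i, P i -> (0 < F i)%N) ->
  ln (INR (\prod_(i <- r | P i) F i)) = \rsum_(i <- r | P i) ln (INR (F i)).
Proof.
move=> H.
have: ((0 < \prod_(i <- r | P i) F i)%N /\ ln (INR (\prod_(i <- r | P i) F i)) = \rsum_(i <- r | P i) ln (INR (F i))).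
  apply: (big_ind2 (fun a b => (0 < a)%N /\ ln (INR a) = b)).
  - by split => //; rewrite ln_1.
  - move=> a1 b1 a2 b2 [Ha1 Hb1] [Ha2 Hb2]; split; first by rewrite muln_gt0 Ha1 Ha2.
    rewrite mult_INR ln_mult ?Hb1 ?Hb2 //; apply: lt_0_INR; apply/ltP => //.
  - by move=> i Pi; split; [apply: H|].
by case.
Qed.

Lemma INR_expn (p k : nat) : INR (p ^ k)%N = INR p ^ k.
Proof. elim: k => [|k IH]; first by rewrite expn0. by rewrite expnS mult_INR IH. Qed.

Lemma ln_pow_nat (p k : nat) : (0 < k)%N -> (0 < p)%N -> ln (INR (p ^ k)) = INR k * ln (INR p).
Proof.
move=> _ Hp; rewrite INR_expn ln_pow //; apply: lt_0_INR; apply/ltP => //.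
Qed.

Lemma ln_decomp n : (0 < n)%N ->
  ln (INR n) = \rsum_(p <- index_iota 0 n.+1) INR (logn p n) * ln (INR p).
Proof.
move=> Hn.
rewrite -{1}(partnT Hn) /partn ln_big; last first.
  move=> p _; rewrite expn_gt0; case: (posnP (logn p n)) => [_|]; first by rewrite orbT.
  by rewrite logn_gt0 mem_primes => /andP [/prime_gt0 ->].
rewrite big_mkcond /=; apply: eq_bigr => p _ /=.
have [H0|Hl] := posnP (logn p n); first by rewrite H0 expn0 /= ln_1; ring.
apply: ln_pow_nat => //.
by move: Hl; rewrite logn_gt0 mem_primes => /andP [/prime_gt0 ->].
Qed.


Lemma count_lt_iota k N : count (fun v => (v < k)%N) (iota 0 N) = minn k N.
Proof.
elim: N => [|N IH]; first by rewrite /= minn0.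
rewrite -addn1 iotaD count_cat IH /= add0n addn0.
case: (ltnP N k) => H; lia.
Qed.

Lemma logn_sum p n N : prime p -> (0 < n)%N -> (n <= N)%N ->
  INR (logn p n) * ln (INR p) =
  \rsum_(v <- index_iota 0 N) (if (p ^ v.+1 %| n)%N then ln (INR p) else 0).
Proof.
move=> Hp Hn HnN; rewrite rsum_count /=.
congr (INR _ * _).
rewrite /index_iota subn0.
have -> : count (fun i => (p ^ i.+1 %| n)%N) (iota 0 N) = count (fun v => (v < logn p n)%N) (iota 0 N).
  by apply: eq_count => v; rewrite pfactor_dvdn.
rewrite count_lt_iota.
have := ltn_logl p Hn; lia.
Qed.

Lemma ln_decomp_smooth M N n : (0 < n)%N -> (n <= N)%N -> all (fun p => (p <= M)%N) (primes n) ->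
  ln (INR n) = \rsum_(p <- index_iota 0 M.+1 | prime p)
     \rsum_(v <- index_iota 0 N) (if (p ^ v.+1 %| n)%N then ln (INR p) else 0).
Proof.
move=> Hn HnN Hs.
have -> : \rsum_(p <- index_iota 0 M.+1 | prime p)
     \rsum_(v <- index_iota 0 N) (if (p ^ v.+1 %| n)%N then ln (INR p) else 0) =
     \rsum_(p <- index_iota 0 M.+1 | prime p) INR (logn p n) * ln (INR p).
  by apply: eq_bigr => p Hp; rewrite (@logn_sum p n N Hp Hn HnN).
rewrite ln_decomp //.
set K := maxn n M.
rewrite (@big_nat_widen _ _ _ 0 n.+1 K.+1); last by rewrite ltnS leq_maxl.
rewrite (@big_nat_widen _ _ _ 0 M.+1 K.+1); last by rewrite ltnS leq_maxr.
rewrite big_mkcond [in RHS]big_mkcond; apply: eq_bigr => p _ /=.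
have [H0|Hl] := posnP (logn p n).
  by rewrite H0 /= !Rmult_0_l; case: (_ && _); case: (_ < _)%N.
have := Hl; rewrite logn_gt0 => Hpr; move: (Hpr); rewrite mem_primes => /and3P [Pp _ Hd].
have -> : (p < n.+1)%N by rewrite ltnS dvdn_leq.
have -> : (p < M.+1)%N by rewrite ltnS; exact: (allP Hs p Hpr).
by rewrite Pp.
Qed.


Lemma ln_le' x y : 0 < x -> x <= y -> ln x <= ln y.
Proof. move=> Hx [H|->]; [left; exact: ln_increasing| right; reflexivity]. Qed.

Lemma exp_le' x y : x <= y -> exp x <= exp y.
Proof. move=> [H|->]; [left; exact: exp_increasing| right; reflexivity]. Qed.

Lemma INR_posn n : (0 < n)%N -> 0 < INR n.
Proof. by move=> H; apply: lt_0_INR; apply/ltP. Qed.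

Lemma INR_leq m n : (m <= n)%N -> INR m <= INR n.
Proof. by move=> H; apply: le_INR; apply/leP. Qed.

Lemma rsum_le_in (I : eqType) (r : seq I) (P : pred I) (F G : I -> R) :
  (forall i, i \in r -> P i -> F i <= G i) -> \rsum_(i <- r | P i) F i <= \rsum_(i <- r | P i) G i.
Proof.
move=> H; rewrite big_seq_cond [X in _ <= X]big_seq_cond; apply: rsum_le => i /andP [Hi Pi]; exact: H.
Qed.

Lemma rsum_drop_cond (I : Type) (r : seq I) (P : pred I) (F : I -> R) :
  (forall i, 0 <= F i) -> \rsum_(i <- r | P i) F i <= \rsum_(i <- r) F i.
Proof.
move=> H; rewrite big_mkcond; apply: rsum_le => i _; case: (P i) => /=; [lra| exact: H].
Qed.

Arguments INR_posn {n}. Arguments INR_leq {m n}.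

Lemma fact_le_pow n : (n`! <= n ^ n)%N.
Proof.
elim: n => [|n IH] //; rewrite factS expnS leq_mul //.
apply: leq_trans IH _; case: n => [|n] //; by rewrite leq_exp2r.
Qed.

Lemma ln_INR_ge0 n : 0 <= ln (INR n).
Proof.
case: n => [|n].
  rewrite /= /ln; case: Rlt_dec => h; [by case: (Rlt_irrefl _ h)| exact: Rle_refl].
rewrite -ln_1; apply: ln_le'; first lra.
rewrite S_INR; have := pos_INR n; lra.
Qed.

Lemma logn_fact_ge p M : prime p -> (1 <= M)%N -> (M %/ p <= logn p M`!)%N.
Proof.
move=> Hp HM; rewrite logn_fact // big_ltn // expn1; exact: leq_addr.
Qed.

Lemma div_half M p : (0 < p)%N -> (p <= M)%N -> (M <= 2 * p * (M %/ p))%N.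
Proof.
move=> Hp HpM.
have Hq : (0 < M %/ p)%N by rewrite divn_gt0.
have Hr : (M %% p < p)%N by rewrite ltn_mod.
have He := divn_eq M p.
nia.
Qed.

Lemma cheb M : (1 <= M)%N ->
  \rsum_(p <- index_iota 0 M.+1 | prime p) (ln (INR p) / INR p) <= 2 * ln (INR M).
Proof.
move=> HM.
have HMr : 0 < INR M by apply: INR_posn.
have Hf : ln (INR M`!) <= INR M * ln (INR M).
  rewrite -ln_pow //; apply: ln_le'; first by apply: INR_posn; exact: fact_gt0.
  rewrite -INR_expn; apply: INR_leq; exact: fact_le_pow.
have Hd := @ln_decomp _ (fact_gt0 M).
have H1 : \rsum_(p <- index_iota 0 M.+1 | prime p) (INR M / 2 * (ln (INR p) / INR p))
      <= ln (INR M`!).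
  rewrite Hd.
  apply: Rle_trans (_ : \rsum_(p <- index_iota 0 M.+1 | prime p) INR (logn p M`!) * ln (INR p) <= _).
    apply: rsum_le_in => p; rewrite mem_index_iota ltnS => /andP [_ HpM] Pp.
    have Pp0 : (0 < p)%N by exact: prime_gt0.
    have HpR := INR_posn Pp0.
    have Hlp : 0 <= ln (INR p) := ln_INR_ge0 p.
    have H1 := INR_leq (@logn_fact_ge p M Pp HM).
    have H2 := INR_leq (@div_half M p Pp0 HpM).
    rewrite !mult_INR in H2.
    have H3 : INR M / 2 / INR p <= INR (M %/ p).
      apply: (Rmult_le_reg_l (2 * INR p)); first lra.
      have -> : 2 * INR p * (INR M / 2 / INR p) = INR M by field; lra.
      have E2 : INR 2 = 2 by rewrite /=; lra.
      rewrite E2 in H2; lra.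
    have -> : INR M / 2 * (ln (INR p) / INR p) = INR M / 2 / INR p * ln (INR p) by field; lra.
    apply: Rmult_le_compat_r => //; lra.
  rewrite (@big_nat_widen _ _ _ 0 M.+1 (M`!).+1); last by rewrite ltnS fact_geq.
  apply: rsum_drop_cond => p.
  apply: Rmult_le_pos; [exact: pos_INR| exact: ln_INR_ge0].
have H2 : \rsum_(p <- index_iota 0 M.+1 | prime p) (INR M / 2 * (ln (INR p) / INR p))
   = INR M / 2 * \rsum_(p <- index_iota 0 M.+1 | prime p) (ln (INR p) / INR p) by rewrite rsum_mull.
rewrite H2 in H1.
have := Rle_trans _ _ _ H1 Hf.
move=> H3.
apply: (Rmult_le_reg_l (INR M / 2)); first lra.
lra.
Qed.


Definition sm (M n : nat) : bool := all (fun p => (p <= M)%N) (primes n).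
Definition psi (M N : nat) : nat := count (sm M) (iota 1 N).

Lemma iotaS1 N : iota 1 N.+1 = iota 1 N ++ [:: N.+1].
Proof. by rewrite -[N.+1]addn1 iotaD add1n addn1. Qed.

Lemma psiS M N : psi M N.+1 = (psi M N + sm M N.+1)%N.
Proof. by rewrite /psi iotaS1 count_cat /= addn0. Qed.

Lemma psi_le_N M N : (psi M N <= N)%N.
Proof. by rewrite /psi; apply: leq_trans (count_size _ _) _; rewrite size_iota. Qed.

Lemma psi_mono M N1 N2 : (N1 <= N2)%N -> (psi M N1 <= psi M N2)%N.
Proof.
move=> H; rewrite -(subnKC H); elim: (N2 - N1)%N => [|k IH]; first by rewrite addn0.
by rewrite addnS psiS; apply: leq_trans IH _; exact: leq_addr.
Qed.

Lemma sm_dvd M d n : (0 < n)%N -> (d %| n)%N -> sm M n -> sm M d.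
Proof.
move=> Hn Hd /allP Hs; apply/allP => p; rewrite mem_primes => /and3P [Pp Hd0 Hpd].
apply: Hs; rewrite mem_primes Pp Hn /=; exact: dvdn_trans Hpd Hd.
Qed.

Lemma divS_dvd N d : (0 < d)%N -> (d %| N.+1)%N -> (N.+1 %/ d = (N %/ d).+1)%N.
Proof.
move=> Hd Hdv.
have [q E] : exists q, (q * d = N.+1)%N by exists (N.+1 %/ d)%N; exact: divnK.
case: d Hd Hdv E => [|d] // _ _ E.
case: q E => [|q] E; first by rewrite mul0n in E.
have EN : N = (q * d.+1 + d)%N by nia.
rewrite -E mulnK // EN divnMDl // divn_small //.
by rewrite addn0.
Qed.

Lemma cnt_div M d N : (0 < d)%N ->
  (count (fun n => sm M n && (d %| n)%N) (iota 1 N) <= psi M (N %/ d))%N.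
Proof.
move=> Hd; elim: N => [|N IH]; first by rewrite div0n.
rewrite iotaS1 count_cat /= addn0.
case Hc: (sm M N.+1 && (d %| N.+1)%N) => /=.
  move/andP: Hc => [Hs Hdv].
  have Hsm : sm M (N %/ d).+1.
    rewrite -divS_dvd //; apply: (@sm_dvd M _ N.+1) => //.
    by rewrite -{2}(divnK Hdv); apply: dvdn_mulr.
  by rewrite divS_dvd // psiS Hsm leq_add2r.
rewrite addn0; apply: leq_trans IH _; apply: psi_mono; exact: leq_div2r.
Qed.


Definition bb (y : R) := 1 - / (2 * ln y).
Definition CC := 6721/100.

Lemma exp_nat n x : exp (INR n * x) = exp x ^ n.
Proof.
elim: n => [|n IH]; first by rewrite /= Rmult_0_l exp_0.
by rewrite S_INR Rmult_plus_distr_r Rmult_1_l exp_plus IH /=; ring.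
Qed.

Lemma lny_ge2 y : 15 <= y -> 2 <= ln y.
Proof.
move=> Hy.
have He : exp 2 <= 9.
  have -> : (2 = INR 2 * 1)%R by rewrite /=; ring.
  rewrite exp_nat; have := exp_le_3; have := exp_pos 1; move=> h1 h2.
  rewrite /=; nra.
rewrite -{1}(ln_exp 2); apply: ln_le'; [exact: exp_pos| lra].
Qed.

Lemma lnC : 15/4 <= ln CC.
Proof.
suff H : exp (15/4) <= CC by rewrite -(ln_exp (15/4)); apply: ln_le' => //; exact: exp_pos.
have E : exp (15/4) ^ 4 = exp 1 ^ 15.
  rewrite -exp_nat -exp_nat; congr exp; rewrite /=; field.
have H3 : exp 1 ^ 15 <= 3 ^ 15 by apply: pow_incr; have := exp_le_3; have := exp_pos 1; split; lra.
have Ha := exp_pos (15/4).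
set a := exp (15/4) in E Ha *.
apply: Rnot_lt_le => Hc.
rewrite /CC in Hc *.
have Hc2 : 6721/100 * (6721/100) < a * a by nra.
have Hc4 : (6721/100 * (6721/100)) * (6721/100 * (6721/100)) < (a * a) * (a * a) by nra.
have : a ^ 4 = (a * a) * (a * a) by rewrite /=; ring.
rewrite E => E2.
have : (3:R) ^ 15 = 14348907 by rewrite /=; lra.
lra.
Qed.

Lemma bb_facts y : 15 <= y -> 3/4 <= bb y /\ bb y < 1 /\ / bb y <= 4/3.
Proof.
move=> Hy; have L2 := @lny_ge2 y Hy; rewrite /bb.
have h1 : 0 < / (2 * ln y) by apply: Rinv_0_lt_compat; lra.
have h2 : / (2 * ln y) <= / 4 by apply: Rinv_le_contravar; lra.
split; first lra. split; first lra.
have -> : (4/3 = / (3/4))%R by field.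
apply: Rinv_le_contravar; lra.
Qed.

Arguments lny_ge2 {y}. Arguments bb_facts {y}.

Lemma small_pow (c a k : R) (n m : nat) : 0 < c -> 0 < k ->
  exp (INR n * (c * ln k)) = k ^ m -> INR n * c = INR m -> True.
Proof. done. Qed.

Lemma Epow p y : 15 <= y -> prime p -> INR p <= y -> 1 + INR p / 3 <= exp (bb y * ln (INR p)).
Proof.
move=> Hy Pp Hpy.
have L2 := lny_ge2 Hy.
have [b1 [b2 b3]] := bb_facts Hy.
have Hp2 : (2 <= p)%N by exact: prime_gt1.
have HpR : 2 <= INR p by have := INR_leq Hp2; rewrite /=; lra.
have Hlp : 0 < ln (INR p) by rewrite -ln_1; apply: ln_increasing; lra.
have HlpL : ln (INR p) <= ln y by apply: ln_le'; lra.
have [Hp5|Hp5] := leqP 5 p.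
  have Hp5R : 5 <= INR p by have := INR_leq Hp5; rewrite /=; lra.
  have -> : bb y * ln (INR p) = ln (INR p) + - (ln (INR p) / (2 * ln y)) by rewrite /bb; field; lra.
  rewrite exp_plus exp_ln; last lra.
  have Hq : exp (- (1/2)) <= exp (- (ln (INR p) / (2 * ln y))).
    apply: exp_le'; apply: Ropp_le_contravar.
    apply: (Rmult_le_reg_l (2 * ln y)); first lra.
    field_simplify; lra.
  have Ha : exp (- (1/2)) * exp (- (1/2)) = / exp 1.
    by rewrite -exp_plus -exp_Ropp; congr exp; field.
  have He := exp_le_3; have He0 := exp_pos 1; have Ha0 := exp_pos (- (1/2)).
  have Hi : 1/3 <= / exp 1.
    have -> : (1/3 = / 3)%R by field.
    by apply: Rinv_le_contravar.
  have Ha47 : 4/7 <= exp (- (1/2)) by nra.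
  nra.
have Hb : exp (3/4 * ln (INR p)) <= exp (bb y * ln (INR p)) by apply: exp_le'; nra.
apply: Rle_trans Hb.
have Ha0 := exp_pos (3/4 * ln (INR p)).
have Ha4 : exp (3/4 * ln (INR p)) ^ 4 = INR p ^ 3.
  rewrite -exp_nat -(exp_ln (INR p)); last lra.
  rewrite -exp_nat ln_exp; congr exp; rewrite /=; field.
move: Ha0 Ha4; set a := exp _ => Ha0 Ha4.
have : p = 2%N \/ p = 3%N by case: p Pp Hp2 Hp5 {Hpy HpR Hlp HlpL a Ha0 Ha4} => [|[|[|[|[|p]]]]] //; auto.
case=> Ep; rewrite Ep /= in Ha4 *.
- have h8 : a * a * (a * a) = 8 by move: Ha4; rewrite /=; nra.
  have : 5/3 <= a.
    apply: Rnot_lt_le => h; have h2 : a * a < 25/9 by nra. nra.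
  lra.
- have h8 : a * a * (a * a) = 27 by move: Ha4; rewrite /=; nra.
  have : 2 <= a.
    apply: Rnot_lt_le => h; have h2 : a * a < 4 by nra. nra.
  lra.
Qed.

Arguments Epow {p y}.

Lemma geom_eq (q : R) (N : nat) : Rmult (1 - q) (\rsum_(v <- iota 0 N) q ^ v.+1) = q - q ^ N.+1.
Proof.
elim: N => [|N IH]; first by rewrite big_nil /=; ring.
rewrite -[N.+1]addn1 iotaD add0n big_cat big_cons big_nil Rmult_plus_distr_l IH addn1 /=; ring.
Qed.

Lemma geom q N : 0 <= q < 1 -> \rsum_(v <- iota 0 N) q ^ v.+1 <= q / (1 - q).
Proof.
move=> Hq; have E := geom_eq q N.
have Hp : 0 <= q ^ N.+1 by apply: pow_le; lra.
apply: (Rmult_le_reg_l (1 - q)); first lra.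
rewrite E; field_simplify; lra.
Qed.

Lemma qsum p y N : 15 <= y -> prime p -> INR p <= y ->
  \rsum_(v <- iota 0 N) exp (- (bb y * ln (INR p))) ^ v.+1 <= 3 / INR p.
Proof.
move=> Hy Pp Hpy.
have HE := Epow Hy Pp Hpy.
have HpR : 2 <= INR p by have := INR_leq (prime_gt1 Pp); rewrite /=; lra.
set E := exp (bb y * ln (INR p)) in HE.
have -> : exp (- (bb y * ln (INR p))) = / E by rewrite exp_Ropp.
have HE0 : 1 < E by lra.
apply: Rle_trans (geom (/ E) N _) _.
  split; [left; apply: Rinv_0_lt_compat; lra| ].
  rewrite -Rinv_1; apply: Rinv_lt_contravar; lra.
have -> : / E / (1 - / E) = / (E - 1) by field; lra.
have -> : 3 / INR p = / (INR p / 3) by field; lra.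
apply: Rinv_le_contravar; lra.
Qed.


Arguments lny_ge2 {y}. Arguments bb_facts {y}. Arguments Epow {p y}.

Definition G (y t : R) := CC * exp (bb y * ln t).

Definition Asum (M N : nat) := \rsum_(n <- iota 1 N | sm M n) (ln (INR N) - ln (INR n)).

Lemma AsumS M N : Asum M N.+1 = Asum M N + INR (psi M N) * (ln (INR N.+1) - ln (INR N)).
Proof.
rewrite /Asum iotaS1 big_cat /= big_cons big_nil.
have -> : (if sm M N.+1 then ln (INR N.+1) - ln (INR N.+1) + 0 else 0) = 0.
  by case: (sm M N.+1); ring.
rewrite Rplus_0_r.
have -> : \rsum_(n <- iota 1 N | sm M n) (ln (INR N.+1) - ln (INR n)) =
          \rsum_(n <- iota 1 N | sm M n) ((ln (INR N) - ln (INR n)) + (ln (INR N.+1) - ln (INR N))).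
  by apply: eq_bigr => n _; ring.
by rewrite big_split rsum_const.
Qed.

Lemma A_bound y M N : 15 <= y -> (1 <= N)%N ->
  (forall k, (1 <= k)%N -> (k < N)%N -> INR (psi M k) <= G y (INR k)) ->
  Asum M N <= CC * exp (bb y * ln (INR N)) / bb y.
Proof.
move=> Hy; have [b1 [b2 b3]] := bb_facts Hy.
have Hb0 : 0 < bb y by lra.
elim: N => [|N IHN] // HN IH.
case: (posnP N) => [->|HN0].
  rewrite /Asum /= big_cons big_nil /=.
  have -> : ln 1 - ln 1 + 0 = 0 by ring.
  have := exp_pos (bb y * ln 1); have := Rinv_0_lt_compat _ Hb0; rewrite /CC /Rdiv => h1 h2.
  apply: Rmult_le_pos; last lra. apply: Rmult_le_pos; lra.
rewrite AsumS.
have H1 := IHN HN0 (fun k hk hkN => IH k hk (ltnW hkN)).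
have H2 := IH N HN0 (ltnSn N).
have HNR : 0 < INR N by apply: INR_posn.
have HN1R : INR N < INR N.+1 by rewrite S_INR; lra.
set d := ln (INR N.+1) - ln (INR N).
have Hd : 0 <= d by rewrite /d; have := ln_increasing _ _ HNR HN1R; lra.
have E : ln (INR N.+1) = ln (INR N) + d by rewrite /d; ring.
rewrite E Rmult_plus_distr_l exp_plus.
have Hx := exp_ineq1_le (bb y * d).
have Hk : 0 < CC * exp (bb y * ln (INR N)) by apply: Rmult_lt_0_compat; [rewrite /CC; lra| exact: exp_pos].
have H3 : INR (psi M N) * d <= CC * exp (bb y * ln (INR N)) * d.
  by apply: Rmult_le_compat_r => //; exact: H2.
set K := CC * exp (bb y * ln (INR N)) in Hk H1 H3 *.
have -> : CC * (exp (bb y * ln (INR N)) * exp (bb y * d)) / bb y = K * exp (bb y * d) / bb y.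
  by rewrite /K; field; lra.
apply: Rle_trans (_ : K / bb y + K * d <= _); first lra.
have -> : K / bb y + K * d = K * (1 + bb y * d) / bb y by field; lra.
apply: Rmult_le_compat_r; first by left; apply: Rinv_0_lt_compat.
apply: Rmult_le_compat_l; lra.
Qed.

Lemma psi_le_G y M N (z : R) : 15 <= y -> (forall k, (1 <= k)%N -> (k < N)%N -> INR (psi M k) <= G y (INR k)) ->
  forall m, (m < N)%N -> INR m <= z -> 0 < z -> INR (psi M m) <= G y z.
Proof.
move=> Hy IH m HmN Hmz Hz; have [b1 [b2 b3]] := bb_facts Hy.
have HG : 0 < G y z by rewrite /G; apply: Rmult_lt_0_compat; [rewrite /CC; lra| exact: exp_pos].
case: (posnP m) => [->|Hm]; first by rewrite /psi /=; lra.
apply: Rle_trans (IH m Hm HmN) _.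
rewrite /G; apply: Rmult_le_compat_l; first by rewrite /CC; lra.
apply: exp_le'; apply: Rmult_le_compat_l; first lra.
apply: ln_le' => //; exact: INR_posn.
Qed.

Lemma T1_bound y M N : 15 <= y -> (1 <= M)%N -> INR M <= y -> (1 <= N)%N ->
  (forall k, (1 <= k)%N -> (k < N)%N -> INR (psi M k) <= G y (INR k)) ->
  \rsum_(n <- iota 1 N | sm M n) ln (INR n) <= 6 * ln y * (CC * exp (bb y * ln (INR N))).
Proof.
move=> Hy HM HMy HN IH.
have [b1 [b2 b3]] := bb_facts Hy.
have L2 := lny_ge2 Hy.
set K := CC * exp (bb y * ln (INR N)).
have HK : 0 < K by rewrite /K; apply: Rmult_lt_0_compat; [rewrite /CC; lra| exact: exp_pos].
have HNR : 0 < INR N by apply: INR_posn.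
have -> : \rsum_(n <- iota 1 N | sm M n) ln (INR n) =
   \rsum_(n <- iota 1 N | sm M n) \rsum_(p <- index_iota 0 M.+1 | prime p)
     \rsum_(v <- index_iota 0 N) (if (p ^ v.+1 %| n)%N then ln (INR p) else 0).
  rewrite big_seq_cond [in RHS]big_seq_cond; apply: eq_bigr => n /andP [Hn Hs].
  move: Hn; rewrite mem_iota => /andP [Hn1 HnN].
  apply: ln_decomp_smooth => //; by rewrite add1n ltnS in HnN.
rewrite exchange_big /=.
have -> : \rsum_(p <- index_iota 0 M.+1 | prime p) \rsum_(n <- iota 1 N | sm M n)
     \rsum_(v <- index_iota 0 N) (if (p ^ v.+1 %| n)%N then ln (INR p) else 0) =
   \rsum_(p <- index_iota 0 M.+1 | prime p) \rsum_(v <- index_iota 0 N)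
     (INR (count (fun n => sm M n && (p ^ v.+1 %| n)%N) (iota 1 N)) * ln (INR p)).
  apply: eq_bigr => p _; rewrite exchange_big /=; apply: eq_bigr => v _.
  exact: rsum_count.
apply: Rle_trans (_ : \rsum_(p <- index_iota 0 M.+1 | prime p) (3 * K * (ln (INR p) / INR p)) <= _).
  apply: rsum_le_in => p; rewrite mem_index_iota ltnS => /andP [_ HpM] Pp.
  have Hp1 := prime_gt1 Pp.
  have HpR : 2 <= INR p by have := INR_leq Hp1; rewrite /=; lra.
  have Hpy : INR p <= y by have := INR_leq HpM; lra.
  have Hlp : 0 <= ln (INR p) := ln_INR_ge0 p.
  apply: Rle_trans (_ : \rsum_(v <- index_iota 0 N) (K * ln (INR p) * exp (- (bb y * ln (INR p))) ^ v.+1) <= _).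
    apply: rsum_le => v _.
    have Hd1 : (1 < p ^ v.+1)%N by have := ltn_exp2l 0 v.+1 Hp1; rewrite expn0 => ->.
    have HdR : 0 < INR (p ^ v.+1)%N by apply: INR_posn; exact: ltnW.
    rewrite Rmult_comm.
    have -> : K * ln (INR p) * exp (- (bb y * ln (INR p))) ^ v.+1 =
              ln (INR p) * (K * exp (- (bb y * ln (INR p))) ^ v.+1) by ring.
    apply: Rmult_le_compat_l => //.
    apply: Rle_trans (INR_leq (@cnt_div M (p ^ v.+1) N (ltnW Hd1))) _.
    apply: (@Rle_trans _ (G y (INR N / INR (p ^ v.+1)%N))).
      apply: (@psi_le_G y M N _ Hy IH).
      - exact: ltn_Pdiv.
      - apply: (Rmult_le_reg_r (INR (p ^ v.+1)%N)) => //.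
        have -> : INR N / INR (p ^ v.+1)%N * INR (p ^ v.+1)%N = INR N by field; lra.
        rewrite -mult_INR; apply: INR_leq; exact: leq_divM.
      - apply: Rdiv_lt_0_compat => //.
    rewrite /G /K /Rdiv ln_mult //; last by apply: Rinv_0_lt_compat.
    rewrite ln_Rinv // INR_expn ln_pow; last lra.
    rewrite -exp_nat Rmult_assoc -exp_plus; right; congr (_ * exp _); ring.
  rewrite rsum_mull /index_iota subn0.
  have Hq := @qsum p y N Hy Pp Hpy.
  have -> : 3 * K * (ln (INR p) / INR p) = K * ln (INR p) * (3 / INR p) by field; lra.
  apply: Rmult_le_compat_l => //; apply: Rmult_le_pos; lra.
rewrite rsum_mull.
have Hc := @cheb M HM.
have HlM : ln (INR M) <= ln y by apply: ln_le' => //; exact: INR_posn.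
have Hs0 : 0 <= \rsum_(p <- index_iota 0 M.+1 | prime p) (ln (INR p) / INR p).
  apply: rsum_ge0 => p Pp; apply: Rmult_le_pos; first exact: ln_INR_ge0.
  left; apply: Rinv_0_lt_compat; apply: INR_posn; exact: prime_gt0.
nra.
Qed.

Lemma main y M : 15 <= y -> (1 <= M)%N -> INR M <= y ->
  forall N, (1 <= N)%N -> INR (psi M N) <= G y (INR N).
Proof.
move=> Hy HM HMy N; elim/ltn_ind: N => N IH0 HN.
have IH : forall k, (1 <= k)%N -> (k < N)%N -> INR (psi M k) <= G y (INR k).
  by move=> k hk hkN; apply: IH0.
have [b1 [b2 b3]] := bb_facts Hy.
have L2 := lny_ge2 Hy.
have HC := lnC.
have HNR : 0 < INR N by apply: INR_posn.
have HpsiN : INR (psi M N) <= INR N by apply: INR_leq; exact: psi_le_N.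
have Hbdef : bb y = 1 - / (2 * ln y) by [].
have HCpos : 0 < CC by rewrite /CC; lra.
have Hexp : G y (INR N) = exp (ln CC + bb y * ln (INR N)) by rewrite /G exp_plus exp_ln.
case: (Rle_or_lt (ln (INR N)) (2 * ln y * ln CC)) => Hc.
  apply: Rle_trans HpsiN _.
  rewrite Hexp -{1}(exp_ln (INR N)) //; apply: exp_le'.
  rewrite Hbdef.
  have -> : ln CC + (1 - / (2 * ln y)) * ln (INR N) = ln (INR N) + (ln CC - ln (INR N) / (2 * ln y)) by field; lra.
  suff : ln (INR N) / (2 * ln y) <= ln CC by lra.
  apply: (Rmult_le_reg_l (2 * ln y)); first lra.
  field_simplify; lra.
set K := CC * exp (bb y * ln (INR N)).
have HK : 0 < K by rewrite /K; apply: Rmult_lt_0_compat => //; exact: exp_pos.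
have HT1 := @T1_bound y M N Hy HM HMy HN IH.
have HA := @A_bound y M N Hy HN IH.
have Hsplit : INR (psi M N) * ln (INR N) =
   \rsum_(n <- iota 1 N | sm M n) ln (INR n) + Asum M N.
  rewrite /Asum -big_split /= -rsum_const; apply: eq_bigr => n _; ring.
have HlN : 15/2 * ln y < ln (INR N) by nra.
have HKb : K / bb y <= K * (4/3) by rewrite /Rdiv; apply: Rmult_le_compat_l; lra.
rewrite -/K in HT1 HA.
have : INR (psi M N) * ln (INR N) <= K * ln (INR N) by nra.
move=> H; rewrite /G -/K.
apply: (Rmult_le_reg_r (ln (INR N))); first lra.
exact: H.
Qed.


Arguments lny_ge2 {y}. Arguments bb_facts {y}.

Lemma floor_nat x : 0 <= x -> exists N : nat, INR N <= x < INR N + 1 /\ Z.to_nat (up x) = N.+1.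
Proof.
move=> Hx; have [H1 H2] := archimed x.
have Hz : (0 < up x)%Z by apply: lt_IZR; lra.
exists (Z.to_nat (up x)).-1.
have E : INR (Z.to_nat (up x)) = IZR (up x) by rewrite INR_IZR_INZ Z2Nat.id //; lia.
have Hp : (0 < Z.to_nat (up x))%N by apply/ltP; lia.
have E2 : ((Z.to_nat (up x)).-1.+1 = Z.to_nat (up x))%N by rewrite prednK.
have E3 : INR (Z.to_nat (up x)).-1 + 1 = IZR (up x) by rewrite -S_INR E2 E.
split; last by rewrite E2.
split; lra.
Qed.

Lemma Rleb_nat y M p : INR M <= y < INR M + 1 -> Rleb (INR p) y = (p <= M)%N.
Proof.
move=> [H1 H2]; rewrite /Rleb; case: Rle_dec => H; case: (leqP p M) => Hp //.
- have := INR_leq Hp; rewrite S_INR; lra.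
- exfalso; apply: H; have := INR_leq Hp; lra.
Qed.

Theorem lemma2 (x y : R) (hy : 15 <= y) (hxy : y < x) :
  INR (Psi x y) <= (6721 / 100) * x * exp (- ((ln x / ln y) / 2)).
Proof.
have hy0 : 0 <= y by lra.
have hx0 : 0 <= x by lra.
have [M [HM _]] := @floor_nat y hy0.
have [N [HN EN]] := @floor_nat x hx0.
have HM1 : (1 <= M)%N.
  case: M HM => [|M] //= HM; lra.
have HN1 : (1 <= N)%N.
  case: N HN EN => [|N] //= HN; lra.
have HPsi : (Psi x y <= psi M N)%N.
  rewrite /Psi EN iotaS1 count_cat /=.
  have -> : Rleb (INR N.+1) x = false.
    rewrite /Rleb; destruct (Rle_dec (INR N.+1) x) as [H|H]; [exfalso; move: H; rewrite S_INR => H; lra| done].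
  rewrite /= !addn0; apply: sub_count => n /andP [_ Hs].
  rewrite /sm; move: Hs; rewrite /smooth; apply: sub_all => p /=.
  by rewrite (@Rleb_nat y M p HM).
have L2 := lny_ge2 hy.
have HxR : 0 < x by lra.
have HNR : 0 < INR N by apply: INR_posn.
have HPsiR : INR (Psi x y) <= INR (psi M N) by apply: le_INR; apply/leP.
apply: Rle_trans HPsiR _.
apply: Rle_trans (@main y M hy HM1 (proj1 HM) N HN1) _.
have [b1 _] := bb_facts hy.
apply: Rle_trans (_ : G y x <= _).
  rewrite /G; apply: Rmult_le_compat_l; first by rewrite /CC; lra.
  apply: exp_le'; apply: Rmult_le_compat_l; first lra.
  apply: ln_le' => //; lra.
rewrite /G /CC /bb.
rewrite -{2}(exp_ln x) // Rmult_assoc -exp_plus; right; congr (_ * exp _).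
field; lra.
Qed.
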